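(* Let $n\ge 2$ and let $V'=\{v_1<\dots<v_{n-1}\}$ be a set of $n-1$ positive integers with $\kappa(V')\ge\frac1n$. If $v_n$ is an integer with $v_n\ge n\,v_{n-1}$, then $V=V'\cup\{v_n\}$ satisfies $\kappa(V)\ge\frac{1}{n+1}$.
   Context: For $x\in\mathbb{R}$, $\|x\|=\min\{x-\lfloor x\rfloor,\lceil x\rceil-x\}$ denotes the distance from $x$ to the nearest integer. For a finite nonempty set $V$ of positive integers, $\kappa(V)=\sup_{t\in(0,1)}\min_{v\in V}\|tv\|$. *)

(* Defs.v *)
From Stdlib Require Import Reals Lra Lia List Sorted.
From Coquelicot Require Import Coquelicot.
Open Scope R_scope.

Definition rfloor (x : R) : R := IZR (Int_part x).
Definition rceil (x : R) : R := - rfloor (- x).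

(* ||x|| = distance from x to the nearest integer *)
Definition dnorm (x : R) : R := Rmin (x - rfloor x) (rceil x - x).

Definition is_min_norm (V : list nat) (t y : R) : Prop :=
  (exists v, In v V /\ y = dnorm (t * INR v)) /\
  (forall v, In v V -> y <= dnorm (t * INR v)).

Definition kappa (V : list nat) : Rbar :=
  Lub_Rbar (fun y => exists t, 0 < t < 1 /\ is_min_norm V t y).

(* Main.v *)
Require Import Defs.
From Stdlib Require Import Reals List Sorted Lra Lia Classical ZArith.
From Coquelicot Require Import Coquelicot.
Open Scope R_scope.

Lemma floor_spec x : rfloor x <= x /\ x < rfloor x + 1.
Proof. unfold rfloor. destruct (base_Int_part x). lra. Qed.

Lemma floor_ge (m : Z) x : IZR m <= x -> IZR m <= rfloor x.
Proof.
  intros H. destruct (floor_spec x) as [_ H2]. unfold rfloor in *.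
  assert (H0: IZR m < IZR (Int_part x + 1)) by (rewrite plus_IZR; lra).
  apply lt_IZR in H0. apply IZR_le. lia.
Qed.

Lemma dnorm_le x (k : Z) : dnorm x <= Rabs (x - IZR k).
Proof.
  unfold dnorm, rceil. destruct (floor_spec x) as [F1 F2].
  destruct (Z_le_gt_dec k (Int_part x)) as [Hk|Hk].
  - apply IZR_le in Hk. unfold rfloor in *.
    rewrite Rabs_pos_eq by lra. apply Rle_trans with (x - IZR (Int_part x)); [apply Rmin_l| lra].
  - assert (H: IZR k >= x).
    { assert (H: IZR (Int_part x + 1) <= IZR k) by (apply IZR_le; lia).
      rewrite plus_IZR in H. unfold rfloor in F2. lra. }
    assert (H0: IZR (-k) <= rfloor (-x)) by (apply floor_ge; rewrite opp_IZR; lra).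
    rewrite opp_IZR in H0.
    rewrite Rabs_left1 by lra. apply Rle_trans with (- rfloor (-x) - x); [apply Rmin_r | lra].
Qed.

Lemma dnorm_attain x : exists k : Z, dnorm x = Rabs (x - IZR k).
Proof.
  unfold dnorm, rceil. destruct (floor_spec x) as [F1 F2]. destruct (floor_spec (-x)) as [G1 G2].
  unfold Rmin. destruct (Rle_dec _ _).
  - exists (Int_part x). unfold rfloor in *. rewrite Rabs_pos_eq; lra.
  - exists (- Int_part (-x))%Z. unfold rfloor in *. rewrite opp_IZR, Rabs_left1; lra.
Qed.

Lemma dnorm_lip x y : dnorm x - Rabs (y - x) <= dnorm y.
Proof.
  destruct (dnorm_attain y) as [k Hk]. pose proof (dnorm_le x k) as H.
  rewrite Hk. pose proof (Rabs_triang (x - y) (y - IZR k)) as H0.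
  replace (x - y + (y - IZR k)) with (x - IZR k) in H0 by ring.
  rewrite (Rabs_minus_sym x y) in H0. lra.
Qed.

Lemma exists_far a c : 0 < c <= 1/2 -> exists x, a - c <= x <= a + c /\ c <= dnorm x.
Proof.
  intros Hc. destruct (Rle_dec c (dnorm a)) as [H|H]. { exists a; split; lra. }
  destruct (dnorm_attain a) as [k Hk].
  destruct (Rle_dec (IZR k) a) as [Ha|Ha].
  - rewrite Rabs_pos_eq in Hk by lra. exists (IZR k + c). split. lra.
    destruct (dnorm_attain (IZR k + c)) as [j Hj]. rewrite Hj.
    destruct (Z_le_gt_dec j k) as [l|l].
    + apply IZR_le in l. rewrite Rabs_pos_eq; lra.
    + assert (H0: IZR (k+1) <= IZR j) by (apply IZR_le; lia). rewrite plus_IZR in H0.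
      rewrite Rabs_left1; lra.
  - rewrite Rabs_left1 in Hk by lra. exists (IZR k - c). split. lra.
    destruct (dnorm_attain (IZR k - c)) as [j Hj]. rewrite Hj.
    destruct (Z_le_gt_dec k j) as [l|l].
    + apply IZR_le in l. rewrite Rabs_left1; lra.
    + assert (H0: IZR (j+1) <= IZR k) by (apply IZR_le; lia). rewrite plus_IZR in H0.
      rewrite Rabs_pos_eq; lra.
Qed.

Lemma min_exists V t : V <> nil -> exists y, is_min_norm V t y.
Proof.
  induction V as [|a V IH]; intros H. { congruence. }
  destruct V as [|b V'].
  - exists (dnorm (t * INR a)). split.
    + exists a; split; [left; reflexivity | reflexivity].
    + intros v [<-|[]]. lra.
  - destruct IH as [y [[v [Hv Hy]] Hall]]. { discriminate. }
    exists (Rmin (dnorm (t * INR a)) y). split.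
    + unfold Rmin; destruct Rle_dec.
      * exists a; split; [left; reflexivity | reflexivity].
      * exists v; split; [right; exact Hv| exact Hy].
    + intros w [<-|Hw]. apply Rmin_l. apply Rle_trans with y; [apply Rmin_r| apply Hall, Hw].
Qed.

Lemma le_last l : StronglySorted Nat.lt l -> forall v, In v l -> (v <= last l 0)%nat.
Proof.
  induction l as [|a l IH]; intros HS v Hv. { destruct Hv. }
  apply StronglySorted_inv in HS as [HS1 HS2]. destruct l as [|b l'].
  - destruct Hv as [<-|[]]. simpl; lia.
  - change (last (a :: b :: l') 0%nat) with (last (b :: l') 0%nat).
    assert (Hb: (b <= last (b::l') 0%nat)%nat) by (apply IH; [assumption| left; reflexivity]).
    destruct Hv as [<-|Hv].
    + rewrite Forall_forall in HS2. specialize (HS2 b (or_introl eq_refl)). unfold Nat.lt in HS2. lia.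
    + apply IH; assumption.
Qed.

Lemma last_in l : l <> nil -> In (last l 0%nat) l.
Proof.
  induction l as [|a l IH]; intros H. { congruence. }
  destruct l as [|b l']. { left; reflexivity. }
  change (last (a::b::l') 0%nat) with (last (b::l') 0%nat). right. apply IH. discriminate.
Qed.
Lemma core n V' vn eps :
  (2 <= n)%nat -> V' <> nil ->
  (forall v, In v V' -> (0 < v)%nat /\ (v <= last V' 0%nat)%nat) ->
  (n * last V' 0%nat <= vn)%nat ->
  0 < eps < 1 / INR (n+1) ->
  forall t0, 0 < t0 < 1 -> (forall v, In v V' -> 1/INR n - eps / INR n < dnorm (t0 * INR v)) ->
  exists t, 0 < t < 1 /\ forall v, In v (V' ++ vn :: nil) -> 1 / INR (n+1) - eps <= dnorm (t * INR v).
Proof.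
  intros Hn Hne Hv Hvn Heps t0 Ht0 Hd.
  set (w := last V' 0%nat) in *.
  assert (Hw : In w V') by (apply last_in; exact Hne).
  set (N := INR n). set (W := INR w). set (Vn := INR vn).
  assert (HN : 2 <= N) by (unfold N; replace 2 with (INR 2) by (simpl; ring); apply le_INR; exact Hn).
  assert (HW : 1 <= W) by (unfold W; replace 1 with (INR 1) by reflexivity; apply le_INR; exact (proj1 (Hv w Hw))).
  assert (HVn : N * W <= Vn) by (unfold N, W, Vn; rewrite <- mult_INR; apply le_INR; exact Hvn).
  replace (INR (n+1)) with (N+1) in * by (unfold N; rewrite plus_INR; simpl; ring).
  set (c := 1 / (N+1)) in *. set (a := 1 / N) in *. set (dl := eps / N) in *.
  assert (Hc : c * (N+1) = 1) by (unfold c; field; lra).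
  assert (Ha : a * N = 1) by (unfold a; field; lra).
  assert (Hdl : dl * N = eps) by (unfold dl; field; lra).
  assert (Hc0 : 0 < c) by (unfold c; apply Rdiv_lt_0_compat; lra).
  assert (Hc3 : c <= 1/3) by nra.
  assert (Hd' : forall v, In v V' -> a - dl < dnorm (t0 * INR v)) by exact Hd.
  set (r := (a - c - dl) / W).
  assert (Hr : r * W = a - c - dl) by (unfold r; field; lra).
  assert (Hdlpos : 0 < dl) by nra.
  assert (Hcdl : (a - c - dl) * N = c - eps) by nra.
  destruct (exists_far (t0 * Vn) (c - eps)) as [x [Hx Hxd]]. { split; lra. }
  assert (HVn0 : 0 < Vn) by nra.
  set (t := x / Vn).
  assert (Htx : t * Vn = x) by (unfold t; field; lra).
  assert (Hpos : 0 < a - c - dl) by nra.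
  assert (Hrp : 0 < r) by nra.
  assert (Htt : Rabs (t - t0) <= r).
  { apply Rabs_le. assert (Hrv : (c - eps) <= r * Vn) by nra. split; nra. }
  pose proof (Hd' w Hw) as Hdw. fold W in Hdw.
  pose proof (dnorm_le (t0 * W) 0) as H0. rewrite Rminus_0_r, Rabs_pos_eq in H0 by nra.
  pose proof (dnorm_le (t0 * W) (Z.of_nat w)) as H1. rewrite <- INR_IZR_INZ in H1. fold W in H1.
  rewrite Rabs_left1 in H1 by nra.
  exists t. split.
  - pose proof (Rle_abs (t - t0)) as A1. pose proof (Rle_abs (-(t - t0))) as A2. rewrite Rabs_Ropp in A2.
    assert (HrW : r * W < t0 * W) by lra. assert (HrW2 : r * W < (1 - t0) * W) by nra.
    assert (r < t0) by nra. assert (r < 1 - t0) by nra. split; lra.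
  - intros v Hin. apply in_app_or in Hin as [Hin|[<-|[]]].
    + destruct (Hv v Hin) as [Hv0 Hvw]. apply le_INR in Hvw. fold W in Hvw.
      pose proof (Hd' v Hin) as Hdv. pose proof (dnorm_lip (t0 * INR v) (t * INR v)) as L.
      replace (t * INR v - t0 * INR v) with ((t - t0) * INR v) in L by ring.
      rewrite Rabs_mult, (Rabs_pos_eq (INR v)) in L by apply pos_INR.
      assert (Rabs (t - t0) * INR v <= r * W).
      { apply Rmult_le_compat; auto using Rabs_pos, pos_INR. }
      nra.
    + fold Vn. rewrite Htx. exact Hxd.
Qed.

Theorem mainTheorem6 (n : nat) (V' : list nat) (vn : nat) :
  (2 <= n)%nat ->
  length V' = (n - 1)%nat ->
  Sorted Nat.lt V' ->
  List.Forall (fun v => (0 < v)%nat) V' ->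
  Rbar_le (Finite (1 / INR n)) (kappa V') ->
  (n * last V' 0 <= vn)%nat ->
  Rbar_le (Finite (1 / INR (n + 1))) (kappa (V' ++ vn :: nil)).
Proof.
  intros Hn Hlen Hsort Hpos Hk Hvn.
  assert (Hne : V' <> nil) by (intros E; subst; simpl in Hlen; lia).
  assert (Htr : RelationClasses.Transitive Nat.lt) by (intros x y z; unfold Nat.lt; lia).
  assert (Hss : StronglySorted Nat.lt V') by (apply Sorted_StronglySorted; assumption).
  assert (Hv : forall v, In v V' -> (0 < v)%nat /\ (v <= last V' 0%nat)%nat).
  { intros v Hin. split. rewrite Forall_forall in Hpos. apply Hpos, Hin. apply le_last; assumption. }
  assert (HN : 0 < INR n) by (apply lt_0_INR; lia).
  assert (HN1 : 0 < INR (n+1)) by (apply lt_0_INR; lia).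
  set (c := 1 / INR (n+1)).
  assert (Hc0 : 0 < c) by (unfold c; apply Rdiv_lt_0_compat; lra).
  set (S := fun y => exists t, 0 < t < 1 /\ is_min_norm (V' ++ vn :: nil) t y).
  assert (Key : forall eps, 0 < eps < c -> exists y, S y /\ c - eps <= y).
  { intros eps Heps.
    set (S' := fun y => exists t, 0 < t < 1 /\ is_min_norm V' t y).
    assert (Hdl : 0 < eps / INR n) by (apply Rdiv_lt_0_compat; lra).
    assert (Ex : exists y, S' y /\ 1 / INR n - eps / INR n < y).
    { apply NNPP. intros Hno.
      assert (Hub : is_ub_Rbar S' (1 / INR n - eps / INR n)).
      { intros y Hy. simpl. apply Rnot_lt_le. intros Hlt. apply Hno. exists y; split; assumption. }
      destruct (Lub_Rbar_correct S') as [_ Hl].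
      pose proof (Rbar_le_trans _ _ _ Hk (Hl _ Hub)) as Hc. simpl in Hc. lra. }
    destruct Ex as [y [[t0 [Ht0 [_ Hmin]]] Hy]].
    assert (Hd : forall v, In v V' -> 1/INR n - eps / INR n < dnorm (t0 * INR v)).
    { intros v Hin. specialize (Hmin v Hin). lra. }
    destruct (core n V' vn eps Hn Hne Hv Hvn Heps t0 Ht0 Hd) as [t [Ht Hall]].
    destruct (min_exists (V' ++ vn :: nil) t) as [y' Hy'].
    { intros E. destruct V'; [congruence | discriminate]. }
    exists y'. split. { exists t. split; assumption. }
    destruct Hy' as [[v [Hin Heq]] _]. rewrite Heq. apply Hall, Hin. }
  unfold kappa. fold S.
  destruct (Lub_Rbar_correct S) as [Hub _].
  destruct (Lub_Rbar S) as [l| |] eqn:E; simpl; auto.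
  - apply Rnot_lt_le. intros Hlt.
    destruct (Key (Rmin ((c - l)/2) (c/2))) as [y [Sy Hy]].
    { split. apply Rmin_glb_lt; lra. apply Rle_lt_trans with (c/2); [apply Rmin_r | lra]. }
    specialize (Hub y Sy). simpl in Hub.
    pose proof (Rmin_l ((c - l)/2) (c/2)). lra.
  - destruct (Key (c/2)) as [y [Sy Hy]]. { split; lra. }
    specialize (Hub y Sy). simpl in Hub. exact Hub.
Qed.
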